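(* Let $G$ be either (i) $K_n-M$ where $n\geq 4$ is even and $M$ is a perfect matching of $K_n$, or (ii) $K_{n,n}-M$ where $n\geq 3$ and $M$ is a perfect matching of $K_{n,n}$. Suppose $G$ is edge-reconstructable (so that $ern(G)$ is defined). Then $ern(G)\geq 3$.
   Context: All graphs are finite and simple; $K-M$ denotes the graph on $V(K)$ with edge set $E(K)\setminus M$. For a graph $G$ and $e\in E(G)$, the unlabeled graph $G-e$ is an edge-card of $G$; the edge-deck $\mathcal{ED}(G)$ is the multiset of all edge-cards $G-e$, $e\in E(G)$ (taken up to isomorphism). For a sub-multiset $S\subseteq\mathcal{ED}(G)$, a blocker of $S$ is a graph $H\not\cong G$ such that $S\subseteq\mathcal{ED}(H)$ as multisets. $G$ is reconstructable from $S$ if $S$ has no blocker; $G$ is edge-reconstructable if it is reconstructable from $\mathcal{ED}(G)$. For such $G$, the edge reconstruction number $ern(G)$ is the minimum size of a sub-multiset $S\subseteq\mathcal{ED}(G)$ from which $G$ is reconstructable. *)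

(* Defs.v *)
From HB Require Import structures.
From mathcomp Require Import all_boot perm.
Set Implicit Arguments. Unset Strict Implicit. Unset Printing Implicit Defensive.

(* A finite simple graph on a vertex type V is represented by its edge set,
   a set of 2-element subsets of V. *)
Notation graph V := {set {set V}}.

Definition simple_graph (V : finType) (E : graph V) : Prop :=
  forall e, e \in E -> #|e| = 2.

Definition giso (V : finType) (E1 E2 : graph V) : Prop :=
  exists p : {perm V}, [set (fun x : V => p x) @: e | e : {set V} in E1] = E2.

Definition complete_graph (V : finType) : graph V := [set e : {set V} | #|e| == 2].

Definition complete_bipartite (n : nat) : graph ('I_n + 'I_n) :=
  [set e : {set 'I_n + 'I_n} | [exists i : 'I_n, exists j : 'I_n, e == [set inl i; inr j]]].

Definition perfect_matching (V : finType) (K M : graph V) : Prop :=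
  [/\ M \subset K,
      (forall e1 e2, e1 \in M -> e2 \in M -> e1 != e2 -> [disjoint e1 & e2])
    & (forall v : V, exists2 e, e \in M & v \in e)].

(* The sequence S of (unlabeled) cards is a sub-multiset of the edge-deck of G:
   distinct edges f i of G with S_i isomorphic to G - f i. *)
Definition sub_deck (V : finType) (S : seq (graph V)) (G : graph V) : Prop :=
  exists f : 'I_(size S) -> {set V},
    injective f /\ forall i, f i \in G /\ giso (nth set0 S i) (G :\ f i).

Definition edge_deck (V : finType) (G : graph V) : seq (graph V) :=
  [seq G :\ e | e <- enum G].

Definition blocker (V : finType) (G : graph V) (S : seq (graph V)) (H : graph V) : Prop :=
  [/\ simple_graph H, ~ giso H G & sub_deck S H].

Definition reconstructable_from (V : finType) (G : graph V) (S : seq (graph V)) : Prop :=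
  sub_deck S G /\ ~ (exists H, blocker G S H).

Definition edge_reconstructable (V : finType) (G : graph V) : Prop :=
  reconstructable_from G (edge_deck G).

(* Main.v *)
Require Import Defs.
From HB Require Import structures.
From mathcomp Require Import all_boot perm zify.
Set Implicit Arguments. Unset Strict Implicit. Unset Printing Implicit Defensive.

Definition img (V : finType) (p : {perm V}) (E : graph V) : graph V :=
  [set (fun x : V => p x) @: e | e : {set V} in E].

Lemma imset2E (V : finType) (f : V -> V) x y : f @: [set x; y] = [set f x; f y].
Proof. by rewrite imsetU1 imset_set1. Qed.

Lemma imsetKV (V : finType) (p : {perm V}) (e : {set V}) :
  (fun x => p x) @: ((fun x => p^-1%g x) @: e) = e.
Proof.
rewrite -imset_comp -[RHS]imset_id; apply: eq_imset => x /=; exact: permKV.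
Qed.

Lemma imsetVK (V : finType) (p : {perm V}) (e : {set V}) :
  (fun x => p^-1%g x) @: ((fun x => p x) @: e) = e.
Proof.
rewrite -imset_comp -[RHS]imset_id; apply: eq_imset => x /=; exact: permK.
Qed.

Lemma mem_img (V : finType) (p : {perm V}) (E : graph V) (e : {set V}) :
  (e \in img p E) = ((fun x => p^-1%g x) @: e \in E).
Proof.
rewrite -{1}(imsetKV p e) /img mem_imset //.
apply: imset_inj; exact: perm_inj.
Qed.

Lemma img_mul (V : finType) (p q : {perm V}) (E : graph V) : img (p * q)%g E = img q (img p E).
Proof.
rewrite /img -imset_comp; apply: eq_imset => e /=.
rewrite -imset_comp; apply: eq_imset => x /=; exact: permM.
Qed.

Lemma img1 (V : finType) (E : graph V) : img 1%g E = E.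
Proof.
rewrite /img -[RHS]imset_id; apply: eq_imset => e /=.
rewrite -[RHS]imset_id; apply: eq_imset => x /=; exact: perm1.
Qed.

Lemma img_sub (V : finType) (p : {perm V}) (E : graph V) :
  (forall e, e \in E -> (fun x => p x) @: e \in E) -> img p E = E.
Proof.
move=> h; apply/eqP; rewrite eqEcard; apply/andP; split.
  by apply/subsetP => e /imsetP [e0 /h he0 ->].
rewrite card_imset //; apply: imset_inj; exact: perm_inj.
Qed.

Lemma giso_trans (V : finType) (A B C : graph V) : giso A B -> giso B C -> giso A C.
Proof.
move=> [p hp] [q hq]; exists (p * q)%g.
change (img (p * q)%g A = C); rewrite img_mul.
change (img p A = B) in hp; change (img q B = C) in hq.
by rewrite hp.
Qed.

Lemma imset_fix (V : finType) (f : V -> V) (e : {set V}) :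
  (forall x, x \in e -> f x = x) -> f @: e = e.
Proof.
move=> h; apply/setP => x; apply/imsetP/idP => [[y hy ->]|hx]; first by rewrite h.
by exists x => //; rewrite h.
Qed.

Lemma set2_neq (V : finType) (x y u v : V) :
  x \notin [set u; v] -> [set x; y] != [set u; v].
Proof. by move=> hx; apply/eqP => he; move: hx; rewrite -he !inE eqxx. Qed.

Lemma pm_uniq (V : finType) (K M : graph V) v w w' :
  perfect_matching K M -> [set v; w] \in M -> [set v; w'] \in M -> v != w -> w = w'.
Proof.
case=> _ hd _ h1 h2 hvw.
have e : [set v; w] = [set v; w'].
  apply/eqP; apply/negPn/negP => hne.
  have := hd _ _ h1 h2 hne.
  by move/disjointFr => /(_ v); rewrite !inE eqxx /= => /(_ isT).
have : w \in [set v; w'] by rewrite -e !inE eqxx orbT.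
by rewrite !inE eq_sym (negbTE hvw) /= => /eqP.
Qed.

Lemma pm_partner (V : finType) (K M : graph V) v :
  (forall e, e \in K -> #|e| = 2) -> perfect_matching K M ->
  exists w, [set v; w] \in M /\ v != w.
Proof.
move=> hK hPM; case: (hPM) => sMK _ /(_ v) [e he hv].
have /cards2P [x [y [hxy exy]]] : #|e| == 2 by rewrite hK // (subsetP sMK).
move: hv; rewrite exy !inE => /orP [] /eqP ->.
  by exists y; rewrite -exy.
by exists x; rewrite setUC -exy eq_sym.
Qed.

Lemma pm_notin (V : finType) (K M : graph V) e f u :
  perfect_matching K M -> e \in M -> f \in M -> e != f -> u \in f -> u \notin e.
Proof. by case=> _ hd _ he hf hne hu; rewrite (disjointFl (hd _ _ he hf hne) hu). Qed.

Definition aut (V : finType) (K M : graph V) (p : {perm V}) :=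
  img p K = K /\ img p M = M.

Lemma aut_G (V : finType) (K M : graph V) p :
  aut K M p -> img p (K :\: M) = K :\: M.
Proof.
case=> hK hM; apply/setP => e.
by rewrite mem_img !inE -!mem_img hK hM.
Qed.

Lemma aut_card (V : finType) (K M : graph V) p e :
  aut K M p -> img p ((K :\: M) :\ e) = (K :\: M) :\ ((fun x => p x) @: e).
Proof.
move=> ha; apply/setP => x.
rewrite mem_img [in LHS]in_setD1 -mem_img aut_G // [in RHS]in_setD1.
congr (~~ _ && _).
rewrite -(inj_eq (imset_inj (@perm_inj _ p))) imsetKV //.
Qed.

Lemma move (V : finType) (K M : graph V) (C : rel V) :
  perfect_matching K M ->
  (forall u v, C u v -> img (tperm u v) K = K) ->
  (forall u v u' v', [set u; u'] \in K -> [set v; v'] \in K -> C u v -> C u' v') ->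
  forall u v u' v', [set u; u'] \in M -> [set v; v'] \in M -> u != u' -> v != v' ->
  C u v ->
  exists s : {perm V}, [/\ aut K M s, s u = v &
     forall x, x != u -> x != v -> x != u' -> x != v' -> s x = x].
Proof.
move=> hPM H1 H2 u v u' v' hu hv nu nv huv.
have sMK := (let: And3 s _ _ := hPM in s).
have [euv|nuv] := eqVneq u v.
  exists 1%g; split; first by split; apply: img1.
    by rewrite perm1.
  by move=> x *; rewrite perm1.
have [evu'|nvu'] := eqVneq v u'.
  exists (tperm u v); split.
  - split; first exact: H1.
    apply: img_sub => e he.
    have [->|ne] := eqVneq e [set u; u'].
      by rewrite imset2E tpermL -evu' tpermR setUC evu'.
    suff -> : (fun x => tperm u v x) @: e = e by [].
    apply: imset_fix => x hx; apply: tpermD.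
      by apply/eqP => ex; move: hx; rewrite -ex; apply/negP; apply: (pm_notin hPM he hu ne); rewrite !inE eqxx.
    by apply/eqP => ex; move: hx; rewrite -ex evu'; apply/negP; apply: (pm_notin hPM he hu ne); rewrite !inE eqxx orbT.
  - exact: tpermL.
  - by move=> x h1 h2 _ _; apply: tpermD; rewrite eq_sym.
have nu'v' : u' != v'.
  apply/eqP => e; move: nuv; rewrite (pm_uniq (v:=u') hPM (w:=u) (w':=v)) ?eqxx //.
  - by rewrite setUC.
  - by rewrite e setUC.
  - by rewrite eq_sym.
have nuv' : u != v'.
  apply/eqP => e; move: nvu'; rewrite (pm_uniq (v:=u) hPM (w:=v) (w':=u')) ?eqxx //.
  by rewrite e setUC.
have H2' := H2 _ _ _ _ (subsetP sMK _ hu) (subsetP sMK _ hv) huv.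
have n1 : u' != v by rewrite eq_sym.
have n2 : v' != v by rewrite eq_sym.
have n3 : u' != u by rewrite eq_sym.
have n4 : v' != u by rewrite eq_sym.
have su : (tperm u v * tperm u' v')%g u = v.
  by rewrite permM tpermL (tpermD n1 n2).
have su' : (tperm u v * tperm u' v')%g u' = v'.
  by rewrite permM (tpermD nu nvu') tpermL.
have sv : (tperm u v * tperm u' v')%g v = u.
  by rewrite permM tpermR (tpermD n3 n4).
have sv' : (tperm u v * tperm u' v')%g v' = u'.
  by rewrite permM (tpermD nuv' nv) tpermR.
exists (tperm u v * tperm u' v')%g; split.
- split.
    by rewrite img_mul H1 // H1.
  apply: img_sub => e he.
  have [->|ne1] := eqVneq e [set u; u'].
    by rewrite imset2E su su'.
  have [->|ne2] := eqVneq e [set v; v'].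
    by rewrite imset2E sv sv'.
  have hn1 : u \notin e by apply: (pm_notin hPM he hu ne1); rewrite !inE eqxx.
  have hn2 : u' \notin e by apply: (pm_notin hPM he hu ne1); rewrite !inE eqxx orbT.
  have hn3 : v \notin e by apply: (pm_notin hPM he hv ne2); rewrite !inE eqxx.
  have hn4 : v' \notin e by apply: (pm_notin hPM he hv ne2); rewrite !inE eqxx orbT.
  suff -> : (fun x => (tperm u v * tperm u' v')%g x) @: e = e by [].
  apply: imset_fix => x hx; rewrite permM.
  have ne : forall y, y \notin e -> y != x by move=> y hy; apply/eqP => ey; move: hy; rewrite ey hx.
  by rewrite !tpermD // ne.
- exact: su.
- by move=> x h1 h2 h3 h4; rewrite permM !tpermD // eq_sym.
Qed.

Lemma card2_set (V : finType) (e : {set V}) : #|e| = 2 -> exists a b, a != b /\ e = [set a; b].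
Proof. by move=> h; apply/cards2P; rewrite h. Qed.

Lemma edge_trans (V : finType) (K M : graph V) (C : rel V) :
  (forall e, e \in K -> #|e| = 2) ->
  perfect_matching K M ->
  (forall u v, C u v -> img (tperm u v) K = K) ->
  (forall u v u' v', [set u; u'] \in K -> [set v; v'] \in K -> C u v -> C u' v') ->
  (forall c d a, [set c; d] \in K -> C c a || C d a) ->
  (forall a x y, [set a; x] \in K -> [set a; y] \in K -> C x y) ->
  forall e1 e2, e1 \in K :\: M -> e2 \in K :\: M ->
  giso ((K :\: M) :\ e2) ((K :\: M) :\ e1).
Proof.
move=> hK2 hPM H1 H2 H5 H6 e1 e2 he1 he2.
have he1' := he1; have he2' := he2.
move: he1' he2'; rewrite !inE => /andP [ne1M e1K] /andP [ne2M e2K].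
have [a [b [nab ee1]]] := card2_set (hK2 _ e1K).
have [c [d [ncd [ee2 hca]]]] : exists c d, c != d /\ e2 = [set c; d] /\ C c a.
  have [c [d [ncd ee2]]] := card2_set (hK2 _ e2K).
  have := H5 c d a; rewrite -ee2 => /(_ e2K) /orP [h|h].
    by exists c, d.
  by exists d, c; rewrite eq_sym setUC.
have [a' [ha' naa']] := pm_partner a hK2 hPM.
have [c' [hc' ncc']] := pm_partner c hK2 hPM.
have [s1 [as1 s1c _]] := move hPM H1 H2 hc' ha' ncc' naa' hca.
set d1 := s1 d.
have hs1e2 : (fun x => s1 x) @: e2 = [set a; d1] by rewrite ee2 imset2E s1c.
have hG1 : [set a; d1] \in K :\: M.
  by rewrite -hs1e2 -(aut_G as1) /img mem_imset //; apply: imset_inj; exact: perm_inj.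
move: (hG1); rewrite inE => /andP [nad1M ad1K].
have nad1 : a != d1.
  by rewrite -s1c (inj_eq (@perm_inj _ s1)).
have [d1' [hd1' nd1d1']] := pm_partner d1 hK2 hPM.
have [b' [hb' nbb']] := pm_partner b hK2 hPM.
have hd1b : C d1 b by apply: (H6 a) => //; rewrite -ee1.
have [s2 [as2 s2d1 s2fix]] := move hPM H1 H2 hd1' hb' nd1d1' nbb' hd1b.
have s2a : s2 a = a.
  apply: s2fix => //.
  - by apply/eqP => e; move: nad1M; rewrite e setUC hd1'.
  - by apply/eqP => e; move: ne1M; rewrite ee1 e setUC hb'.
exists (s1 * s2)%g.
change (img (s1 * s2)%g ((K :\: M) :\ e2) = (K :\: M) :\ e1).
by rewrite img_mul aut_card // hs1e2 aut_card // imset2E s2a s2d1 ee1.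
Qed.

Lemma set2_neqr (V : finType) (x y u v : V) :
  y != u -> y != v -> ([set x; y] == [set u; v]) = false.
Proof.
move=> h1 h2; apply/negbTE; rewrite setUC; apply: set2_neq.
by rewrite !inE negb_or h1 h2.
Qed.

Lemma set2_neql (V : finType) (x y u v : V) :
  x != u -> x != v -> ([set x; y] == [set u; v]) = false.
Proof. by move=> h1 h2; apply/negbTE; apply: set2_neq; rewrite !inE negb_or h1 h2. Qed.

Lemma tau_eq (V : finType) (t : {perm V}) (e f : {set V}) :
  (forall x, t (t x) = x) ->
  ((fun x => t x) @: e == f) = (e == (fun x => t x) @: f).
Proof.
move=> ht; rewrite -(inj_eq (imset_inj (@perm_inj _ t))).
by rewrite -imset_comp (eq_imset (g:=id)) ?imset_id.
Qed.


Lemma tau_iso (V : finType) (K M : graph V) a b a' b' :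
  perfect_matching K M ->
  img (tperm a b') K = K ->
  [set a'; b'] \in K ->
  [set a; b] \in K -> [set a; b] \notin M -> [set a; a'] \in M -> [set b; b'] \in M ->
  a != b -> a != a' -> b != b' ->
  img (tperm a b') ((K :\: M) :\ [set a; b]) =
  (((K :\: M) :\ [set a; b]) :|: [set [set a; a']]) :\ [set a'; b'].
Proof.
move=> hPM hK ha'b'K habK habM haa' hbb' nab naa' nbb'.
have sMK := (let: And3 s _ _ := hPM in s).
have na'b : a' != b.
  by apply/eqP => e; move: habM; rewrite -e haa'.
have nb'a : b' != a.
  by apply/eqP => e; move: habM; rewrite setUC -e hbb'.
have na'b' : a' != b'.
  apply/eqP => e; move: nab; rewrite (pm_uniq (v:=a') hPM (w:=a) (w':=b)) ?eqxx //.
  - by rewrite setUC.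
  - by rewrite e setUC.
  - by rewrite eq_sym.
set t := tperm a b'.
have tt : forall x, t (t x) = x by move=> x; rewrite /t tpermK.
have ta : t a = b' by rewrite /t tpermL.
have tb' : t b' = a by rewrite /t tpermR.
have tb : t b = b by apply: tpermD => //; rewrite eq_sym.
have ta' : t a' = a' by apply: tpermD => //; rewrite eq_sym.
have tK : forall e : {set V}, ((fun x => t x) @: e \in K) = (e \in K).
  by move=> e; rewrite -{2}hK mem_img /t tpermV.
have a'b'M : [set a'; b'] \notin M.
  apply/negP => h; move: nb'a; rewrite (pm_uniq (v:=a') hPM (w:=b') (w':=a)) ?eqxx //.
    by rewrite setUC.
have ttK : forall e : {set V}, (fun x => t x) @: ((fun x => t x) @: e) = e.
  by move=> e; rewrite -imset_comp (eq_imset (g:=id)) ?imset_id.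
have tM : forall e : {set V}, ((fun x => t x) @: e \in M) =
   [|| e == [set a; b], e == [set a'; b'] |
       [&& e != [set a; a'], e != [set b; b'] & e \in M]].
  move=> e.
  have [->|n1] := eqVneq e [set a; b].
    by rewrite imset2E ta tb setUC hbb'.
  have [->|n2] := eqVneq e [set a'; b'].
    by rewrite imset2E ta' tb' setUC haa' orbT.
  have [->|n3] := eqVneq e [set a; a'].
    by rewrite imset2E ta ta' setUC (negbTE a'b'M).
  have [->|n4] := eqVneq e [set b; b'].
    by rewrite imset2E tb tb' setUC (negbTE habM).
  rewrite /=.
  have fix1 : forall g : {set V}, g \in M -> g != [set a; a'] -> g != [set b; b'] ->
      (fun x => t x) @: g = g.
    move=> g hg g1 g2; apply: imset_fix => x hx; apply: tpermD.
      by apply/eqP => ex; move: hx; rewrite -ex; apply/negP;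
         apply: (pm_notin hPM hg haa' g1); rewrite !inE eqxx.
    by apply/eqP => ex; move: hx; rewrite -ex; apply/negP;
       apply: (pm_notin hPM hg hbb' g2); rewrite !inE eqxx orbT.
  apply/idP/idP => h.
    have g1 : (fun x => t x) @: e != [set a; a'].
      by rewrite tau_eq // imset2E ta ta' setUC.
    have g2 : (fun x => t x) @: e != [set b; b'].
      by rewrite tau_eq // imset2E tb tb' setUC.
    have := fix1 _ h g1 g2.
    by rewrite ttK => ->.
  by rewrite fix1.
apply/setP => e.
rewrite mem_img /t tpermV -/t in_setD1 in_setD tK tM tau_eq //.
rewrite imset2E ta tb in_setD1 in_setU in_setD1 in_setD in_set1.
rewrite (setUC [set b'] [set b]).
have f1 : ([set a; a'] == [set b; b']) = false by apply: set2_neql; rewrite // eq_sym.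
have f2 : ([set a; a'] == [set a; b]) = false by apply: set2_neqr; rewrite // eq_sym.
have f3 : ([set a; a'] == [set a'; b']) = false by apply: set2_neql; rewrite // eq_sym.
have f4 : ([set b; b'] == [set a; a']) = false by apply: set2_neql; rewrite // eq_sym.
have f5 : ([set b; b'] == [set a'; b']) = false by apply: set2_neql; rewrite // eq_sym.
have f6 : ([set b; b'] == [set a; b]) = false by apply: set2_neqr; rewrite // eq_sym.
have [->|n3] := eqVneq e [set a; a'].
  by rewrite f1 f2 f3 /= (subsetP sMK _ haa') orbT.
have [->|n4] := eqVneq e [set b; b'].
  by rewrite hbb' /= !andbF.
rewrite /=.
by case: (e == [set a; b]); case: (e == [set a'; b']); case: (e \in M); case: (e \in K).
Qed.

Definition N (V : finType) (E : graph V) (v : V) : {set V} := [set w | [set v; w] \in E].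

Lemma N_img (V : finType) (p : {perm V}) (E : graph V) v :
  N (img p E) (p v) = (fun x => p x) @: N E v.
Proof.
apply/setP => w; rewrite inE mem_img imset2E permK.
rewrite -[in RHS](permKV p w) mem_imset; last exact: perm_inj.
by rewrite inE.
Qed.

Lemma NG (V : finType) (K M : graph V) v :
  (forall e, e \in K -> #|e| = 2) -> perfect_matching K M ->
  #|N K v| = (#|N (K :\: M) v|).+1.
Proof.
move=> hK2 hPM; have sMK := (let: And3 s _ _ := hPM in s).
have [v' [hv' nvv']] := pm_partner v hK2 hPM.
have -> : N K v = v' |: N (K :\: M) v.
  apply/setP => w; rewrite !inE.
  have [->|nw] := eqVneq w v'; first by rewrite (subsetP sMK _ hv').
  rewrite /=.
  case hK: ([set v; w] \in K); last by rewrite andbF.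
  rewrite andbT; apply/esym/negP => hM.
  have [ew|nvw] := eqVneq v w.
    by move: (hK2 _ hK); rewrite -ew setUid cards1.
  by move: nw; rewrite (pm_uniq hPM hM hv' nvw) eqxx.
by rewrite cardsU1 !inE hv'.
Qed.

Lemma H_not_iso (V : finType) (K M : graph V) a b a' :
  (forall e, e \in K -> #|e| = 2) -> perfect_matching K M ->
  (forall u v, #|N K u| = #|N K v|) ->
  [set a; b] \in K :\: M -> [set a; a'] \in M -> a != b -> a != a' ->
  ~ giso (((K :\: M) :\ [set a; b]) :|: [set [set a; a']]) (K :\: M).
Proof.
move=> hK2 hPM hreg hab haa' nab naa' [p hp].
change (img p (((K :\: M) :\ [set a; b]) :|: [set [set a; a']]) = K :\: M) in hp.
have nba' : b != a'.
  by apply/eqP => e; move: hab; rewrite inE e haa'.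
have h1 := N_img p (((K :\: M) :\ [set a; b]) :|: [set [set a; a']]) b.
rewrite hp in h1.
have h2 : #|N (K :\: M) (p b)| = #|N (K :\: M) b|.
  by apply/eq_add_S; rewrite -!(NG _ hK2 hPM) (hreg _ b).
have h3 : N (((K :\: M) :\ [set a; b]) :|: [set [set a; a']]) b \proper N (K :\: M) b.
  apply/properP; split.
    apply/subsetP => w; rewrite !inE => /orP [/andP [_ ->] //|/eqP e].
    have : b \in [set a; a'] by rewrite -e !inE eqxx ?orbT.
    by rewrite !inE eq_sym (negbTE nab) (negbTE nba').
  exists a; first by rewrite inE setUC.
  have nba : b != a by rewrite eq_sym.
  by rewrite !inE setUC eqxx /= set2_neqr.
have := proper_card h3.
rewrite -h2 h1 card_imset ?ltnn //; exact: perm_inj.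
Qed.

Lemma generic (V : finType) (K M : graph V) (C : rel V) (v0 : V) :
  (forall e, e \in K -> #|e| = 2) ->
  perfect_matching K M ->
  (forall u v, C u v -> img (tperm u v) K = K) ->
  (forall u v u' v', [set u; u'] \in K -> [set v; v'] \in K -> C u v -> C u' v') ->
  (forall a b a' b', [set a; b] \in K -> [set a; a'] \in K -> [set b; b'] \in K ->
       a' != b' -> [set a'; b'] \in K) ->
  (forall c d a, [set c; d] \in K -> C c a || C d a) ->
  (forall a x y, [set a; x] \in K -> [set a; y] \in K -> C x y) ->
  (forall u v, #|N K u| = #|N K v|) ->
  forall S, reconstructable_from (K :\: M) S -> 3 <= size S.
Proof.
move=> hK2 hPM H1 H2 H3 H5 H6 H7 S [[f [finj hf]] nob].
have sMK := (let: And3 s _ _ := hPM in s).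
rewrite leqNgt; apply/negP => hs; apply: nob.
case: (posnP (size S)) => hs0.
  exists K; split => //.
  - move=> [p hp].
    change (img p K = K :\: M) in hp.
    have [w [hw _]] := pm_partner v0 hK2 hPM.
    have hpr : K :\: M \proper K.
      apply/properP; split; first exact: subsetDl.
      by exists [set v0; w]; rewrite ?(subsetP sMK _ hw) // inE hw.
    have := proper_card hpr; rewrite -hp card_imset ?ltnn //.
    apply: imset_inj; exact: perm_inj.
  - exists f; split => //; case=> x hx; exfalso; move: hx; by rewrite hs0.
set i0 : 'I_(size S) := Ordinal hs0.
have [he1 _] := hf i0.
move: (he1); rewrite inE => /andP [e1M e1K].
have [a [b [nab ee1]]] := card2_set (hK2 _ e1K).
have [a' [haa' naa']] := pm_partner a hK2 hPM.
have [b' [hbb' nbb']] := pm_partner b hK2 hPM.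
have habM : [set a; b] \notin M by rewrite -ee1.
have habK : [set a; b] \in K by rewrite -ee1.
have na'b : a' != b.
  by apply/eqP => e; move: habM; rewrite -e haa'.
have nb'a : b' != a.
  by apply/eqP => e; move: habM; rewrite setUC -e hbb'.
have na'b' : a' != b'.
  apply/eqP => e; move: nab; rewrite (pm_uniq (v:=a') hPM (w:=a) (w':=b)) ?eqxx //.
  - by rewrite setUC.
  - by rewrite e setUC.
  - by rewrite eq_sym.
have a'b'K : [set a'; b'] \in K.
  by apply: (H3 a b) => //; apply: (subsetP sMK).
have a'b'M : [set a'; b'] \notin M.
  apply/negP => h; move: nb'a; rewrite (pm_uniq (v:=a') hPM (w:=b') (w':=a)) ?eqxx //.
    by rewrite setUC.
set G := K :\: M.
set H := (G :\ [set a; b]) :|: [set [set a; a']].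
have nf12 : [set a; a'] != [set a'; b'].
  by apply/negbT; apply: set2_neql => //; rewrite eq_sym.
have f2H : [set a'; b'] \in H.
  rewrite !inE a'b'M a'b'K /= andbT; apply/orP; left.
  by apply/negbT; apply: set2_neql; rewrite // eq_sym.
have Hf1 : H :\ [set a; a'] = G :\ [set a; b].
  apply/setP => e; rewrite !inE.
  have [->|ne] := eqVneq e [set a; a'].
    by rewrite haa' /= !andbF.
  by rewrite orbF.
have tiso : giso (G :\ [set a; b]) (H :\ [set a'; b']).
  exists (tperm a b').
  change (img (tperm a b') ((K :\: M) :\ [set a; b]) =
     ((K :\: M) :\ [set a; b] :|: [set [set a; a']]) :\ [set a'; b']).
  apply: tau_iso => //.
  apply: H1; apply: (H6 b); first by rewrite setUC.
  exact: (subsetP sMK).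
exists H; split.
- move=> e; rewrite !inE => /orP [/andP [_ /andP [_ /hK2 //]]|/eqP ->].
  by rewrite cards2 naa'.
- by apply: H_not_iso => //; rewrite -ee1.
- exists (fun i : 'I_(size S) => if val i == 0 then [set a; a'] else [set a'; b']).
  split.
  + move=> i j /=.
    case: ifP => hi; case: ifP => hj => e.
    * by apply: ord_inj; move/eqP: hi => ->; move/eqP: hj => ->.
    * by move: nf12; rewrite e eqxx.
    * by move: nf12; rewrite e eqxx.
    * have k1 : forall k : 'I_(size S), (k == 0 :> nat) = false -> (k : nat) = 1.
        move=> [k hk] /=; case: k hk => [|[|k]] hk hk0 //; exfalso.
        by move: hs; rewrite ltnS => hs'; have := leq_trans hk hs'.
      by apply: ord_inj; rewrite k1 // k1.
  + move=> i; case: ifP => hi.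
      have ei : i = i0 by apply: val_inj; move/eqP: hi.
      split; first by rewrite !inE eqxx orbT.
      rewrite Hf1 -ee1 -ei; exact: (hf i).2.
    split => //.
    have [hfi gi] := hf i.
    apply: (giso_trans gi); apply: (giso_trans _ tiso).
    rewrite -ee1.
    by apply: (edge_trans (C:=C)).
Qed.

Lemma case_complete (n : nat) (M : graph 'I_n) :
  4 <= n -> perfect_matching (complete_graph 'I_n) M ->
  forall S, reconstructable_from (complete_graph 'I_n :\: M) S -> 3 <= size S.
Proof.
move=> h4 hPM.
have hn : 0 < n by apply: leq_trans h4.
have hK : forall e : {set 'I_n}, (e \in complete_graph 'I_n) = (#|e| == 2).
  by move=> e; rewrite inE.
apply: (generic (C := fun _ _ => true) (Ordinal hn) _ hPM).
- by move=> e; rewrite hK => /eqP.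
- move=> u v _; apply: img_sub => e; rewrite !hK card_imset //; exact: perm_inj.
- by [].
- by move=> a b a' b' _ _ _ h; rewrite hK cards2 h.
- by [].
- by [].
- have NK : forall u, N (complete_graph 'I_n) u = [set~ u].
    move=> u; apply/setP => w; rewrite !inE cards2 [w == u]eq_sym.
    by case: (u != w).
  by move=> u v; rewrite !NK !cardsC1.
Qed.

Definition side (n : nat) (x : 'I_n + 'I_n) : bool := if x is inl _ then true else false.

Lemma bipK (n : nat) (x y : 'I_n + 'I_n) :
  ([set x; y] \in complete_bipartite n) = (side x != side y).
Proof.
rewrite inE; apply/existsP/idP.
  case=> i /existsP [j /eqP e].
  have hi : inl i \in [set x; y] by rewrite e !inE eqxx.
  have hj : inr j \in [set x; y] by rewrite e !inE eqxx orbT.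
  move: hi hj; rewrite !inE.
  by case/orP => /eqP ex; case/orP => /eqP ey; subst; rewrite /= ?eqxx; try congruence.
case: x => [i|i]; case: y => [j|j] //= _.
  by exists i; apply/existsP; exists j.
by exists j; apply/existsP; exists i; rewrite setUC.
Qed.

Lemma bipK_form (n : nat) (e : {set 'I_n + 'I_n}) :
  e \in complete_bipartite n -> exists x y, e = [set x; y] /\ side x != side y.
Proof.
rewrite inE => /existsP [i /existsP [j /eqP ->]].
by exists (inl i), (inr j).
Qed.

Lemma side_tperm (n : nat) (u v x : 'I_n + 'I_n) :
  side u = side v -> side (tperm u v x) = side x.
Proof. by move=> h; case: tpermP => // ->. Qed.

Lemma card_side (n : nat) (b : bool) : #|[set w : 'I_n + 'I_n | side w == b]| = n.
Proof.
case: b.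
  have -> : [set w : 'I_n + 'I_n | side w == true] = [set inl i | i in 'I_n].
    apply/setP => w; case: w => [i|i]; rewrite inE /=.
      by rewrite mem_imset //; move=> x y [].
    by apply/esym/imsetP => [[x _]].
  by rewrite card_imset ?card_ord // => x y [].
have -> : [set w : 'I_n + 'I_n | side w == false] = [set inr i | i in 'I_n].
  apply/setP => w; case: w => [i|i]; rewrite inE /=.
    by apply/esym/imsetP => [[x _]].
  by rewrite mem_imset //; move=> x y [].
by rewrite card_imset ?card_ord // => x y [].
Qed.

Lemma case_bip (n : nat) (M : graph ('I_n + 'I_n)) :
  3 <= n -> perfect_matching (complete_bipartite n) M ->
  forall S, reconstructable_from (complete_bipartite n :\: M) S -> 3 <= size S.
Proof.
move=> h3 hPM.
have hn : 0 < n by apply: leq_trans h3.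
apply: (generic (C := fun u v => side u == side v) (inl (Ordinal hn)) _ hPM).
- move=> e /bipK_form [x [y [-> hxy]]]; rewrite cards2.
  by case: x y hxy => [i|i] [j|j].
- move=> u v /eqP huv; apply: img_sub => e /bipK_form [x [y [-> hxy]]].
  by rewrite imset2E bipK !(side_tperm _ huv).
- move=> u v u' v'; rewrite !bipK.
  by move: (side u) (side u') (side v) (side v') => [] [] [] [].
- move=> a b a' b'; rewrite !bipK => h1 h2 h3' _.
  by move: h1 h2 h3'; move: (side a) (side a') (side b) (side b') => [] [] [] [].
- move=> c d a; rewrite !bipK.
  by move: (side c) (side d) (side a) => [] [] [].
- move=> a x y; rewrite !bipK.
  by move: (side a) (side x) (side y) => [] [] [].
- have NK : forall u, N (complete_bipartite n) u = [set w | side w == ~~ side u].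
    move=> u; apply/setP => w; rewrite [in LHS]inE bipK [in RHS]inE.
    by move: (side u) (side w) => [] [].
  by move=> u v; rewrite !NK !card_side.
Qed.

Theorem mainTheorem7 :
  (forall (n : nat) (M : graph 'I_n),
     4 <= n -> ~~ odd n -> perfect_matching (complete_graph 'I_n) M ->
     edge_reconstructable (complete_graph 'I_n :\: M) ->
     forall S, reconstructable_from (complete_graph 'I_n :\: M) S -> 3 <= size S)
  /\
  (forall (n : nat) (M : graph ('I_n + 'I_n)),
     3 <= n -> perfect_matching (complete_bipartite n) M ->
     edge_reconstructable (complete_bipartite n :\: M) ->
     forall S, reconstructable_from (complete_bipartite n :\: M) S -> 3 <= size S).
Proof.
split.
  by move=> n M h4 _ hPM _; exact: case_complete.
by move=> n M h3 hPM _; exact: case_bip.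
Qed.
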